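(* In the setting below, if $\alpha=0$ or $\alpha$ is a limit ordinal, then there exists $x\in M_{\alpha+1}$ such that $\bigcup x\notin M$.
   Context: Work in ZFA (ZF with a set $A$ of atoms, i.e. urelements that have no elements), extended by a primitive binary relation $\preccurlyeq$ on $A$, with Separation and Replacement holding for formulas mentioning $\preccurlyeq$. $A$ is an infinite set of atoms and $\preccurlyeq$ is a pre-ordering (reflexive, transitive) on $A$ with no minimal elements: for every $a\in A$ there is $b\in A$ with $b\preccurlyeq a$ and not $a\preccurlyeq b$. For $a\in A$, $pr(a)=\{b\in A:b\preccurlyeq a\}$; $LO(A,\preccurlyeq)$ is the set of nonempty $x\subseteq A$ with $pr(a)\subseteq x$ for all $a\in x$. For a set $X$ of sets, $LO(X,\subseteq)$ is the set of nonempty $x\subseteq X$ such that for every $y\in x$ and every $z\in X$ with $z\subseteq y$, $z\in x$. The magmatic hierarchy: $M_1=LO(A,\preccurlyeq)$; $M_{\alpha+1}=LO(M_\alpha,\subseteq)$ for $\alpha\geq1$; $M_\alpha=\bigcup_{1\leq\beta<\alpha}M_\beta$ for limit $\alpha$; $M=\bigcup_{\alpha\geq1}M_\alpha$. $\bigcup x=\{z:\exists y\in x\,(z\in y)\}$, where atoms have no elements (so $\bigcup x=\emptyset$ if $x\subseteq A$). *)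

(* Defs.v *)
(* We work inside Aczel's type-theoretic model of ZFA:
   well-founded trees whose leaves are atoms (elements of the type A),
   with extensional equality [eqV] and membership [memV]. *)
From Stdlib Require Import List.


Section ZFA.
Variable A : Type.

Inductive V : Type :=
| atom : A -> V
| node : forall I : Type, (I -> V) -> V.

Set Implicit Arguments.

Fixpoint eqV (x y : V) {struct x} : Prop :=
  match x, y with
  | atom a, atom b => a = b
  | node II f, node JJ g =>
      (forall i, exists j, eqV (f i) (g j)) /\ (forall j, exists i, eqV (f i) (g j))
  | _, _ => False
  end.

Definition memV (y x : V) : Prop :=
  match x with
  | atom _ => False
  | node II f => exists i, eqV y (f i)
  end.

Definition isSet (x : V) : Prop :=
  match x with atom _ => False | node _ _ => True end.

Definition nonempty (x : V) : Prop := exists y, memV y x.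

Definition subsetV (z y : V) : Prop :=
  isSet z /\ isSet y /\ forall w, memV w z -> memV w y.

Definition idx (x : V) : Type :=
  match x with atom _ => Empty_set | node II _ => II end.

Definition elt (x : V) : idx x -> V :=
  match x return idx x -> V with
  | atom _ => fun e => match e with end
  | node II f => f
  end.

(** Union: [bigcup x = { z | exists y in x, z in y }]; bigcup of an atom is empty. *)
Definition bigcup (x : V) : V :=
  node {i : idx x & idx (elt x i)} (fun p => elt (elt x (projT1 p)) (projT2 p)).

Definition succV (a : V) : V :=
  node (option (idx a)) (fun o =>
          match o with Some i => elt a i | None => a end).

(** Membership is well-founded in this model, so this is a well-order. *)
Definition Ord (a : V) : Prop :=
  isSet a /\
  (forall y, memV y a -> isSet y /\ forall z, memV z y -> memV z a) /\
  (forall y z, memV y a -> memV z a -> memV y z \/ eqV y z \/ memV z y) /\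
  (forall y z w, memV y a -> memV z a -> memV w a -> memV y z -> memV z w -> memV y w).

Definition isLimit (a : V) : Prop :=
  nonempty a /\ ~ (exists b, Ord b /\ eqV a (succV b)).

Variable le : A -> A -> Prop.

Definition LOA (x : V) : Prop :=
  isSet x /\ nonempty x /\
  (forall y, memV y x -> exists a, eqV y (atom a)) /\
  (forall a b, memV (atom a) x -> le b a -> memV (atom b) x).

Definition LOset (X : V -> Prop) (x : V) : Prop :=
  isSet x /\ nonempty x /\
  (forall y, memV y x -> X y) /\
  (forall y z, memV y x -> X z -> subsetV z y -> memV z x).

(** [Mlev a x] : x ∈ M_a, defined by recursion on (the tree of) the ordinal a:
    - a = 1 (= 0 + 1):                M_1 = LO(A, ≼)
    - a = b + 1 with b ≥ 1:           M_{b+1} = LO(M_b, ⊆)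
    - a limit:                        M_a = ⋃_{1 ≤ b < a} M_b
    (M_0 is empty / undefined; it is never used.) *)
Fixpoint Mlev (a x : V) {struct a} : Prop :=
  match a with
  | atom _ => False
  | node II f =>
      (exists i, (forall j, memV (f j) (f i) \/ eqV (f j) (f i)) /\
                 ~ nonempty (f i) /\ LOA x)
   \/ (exists i, (forall j, memV (f j) (f i) \/ eqV (f j) (f i)) /\
                 nonempty (f i) /\ LOset (fun z => Mlev (f i) z) x)
   \/ ((exists i : II, True) /\
       ~ (exists i, forall j, memV (f j) (f i) \/ eqV (f j) (f i)) /\
       exists i, nonempty (f i) /\ Mlev (f i) x)
  end.

Definition inM (x : V) : Prop := exists a, Ord a /\ nonempty a /\ Mlev a x.

End ZFA.
Arguments node {A} I _.

(* Main.v *)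
Require Import Defs.
From Stdlib Require Import List Classical.

Lemma eqV_refl {A} (x : V A) : eqV x x.
Proof. induction x as [a| I f IH]; simpl; auto. split; intro i; exists i; apply IH. Qed.

Lemma eqV_sym {A} (x y : V A) : eqV x y -> eqV y x.
Proof. revert y; induction x as [a|I f IH]; intros [b|J g]; simpl; try tauto.
 - intros; subst; reflexivity.
 - intros [H1 H2]; split.
   + intro j; destruct (H2 j) as [i Hi]; exists i; apply IH; exact Hi.
   + intro i; destruct (H1 i) as [j Hj]; exists j; apply IH; exact Hj.
Qed.

Lemma eqV_trans {A} (x y z : V A) : eqV x y -> eqV y z -> eqV x z.
Proof. revert y z; induction x as [a|I f IH]; intros [b|J g] [c|K h]; simpl; try tauto.
 - intros; subst; reflexivity.
 - intros [H1 H2] [H3 H4]; split.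
   + intro i; destruct (H1 i) as [j Hj]; destruct (H3 j) as [k Hk]; exists k; eauto.
   + intro k; destruct (H4 k) as [j Hj]; destruct (H2 j) as [i Hi]; exists i; eauto.
Qed.

Lemma memV_eqV_r {A} (x x' y : V A) : eqV x x' -> memV y x -> memV y x'.
Proof. destruct x as [a|I f]; destruct x' as [b|J g]; simpl; try tauto.
 intros [H1 _] [i Hi]. destruct (H1 i) as [j Hj]. exists j. eapply eqV_trans; eauto. Qed.

Lemma memV_eqV_l {A} (x y y' : V A) : eqV y y' -> memV y x -> memV y' x.
Proof. destruct x as [a|I f]; simpl; try tauto.
 intros H [i Hi]. exists i. eapply eqV_trans; [apply eqV_sym; exact H| exact Hi]. Qed.

Lemma memV_refl {A} I (f : I -> V A) i : memV (f i) (node I f).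
Proof. exists i; apply eqV_refl. Qed.

Lemma nonempty_eqV {A} (x x' : V A) : eqV x x' -> nonempty x -> nonempty x'.
Proof. intros H [y Hy]. exists y. eapply memV_eqV_r; eauto. Qed.

Lemma isSet_eqV {A} (x x' : V A) : eqV x x' -> isSet x -> isSet x'.
Proof. destruct x, x'; simpl; tauto. Qed.

Definition empt {A} (z : V A) := isSet z /\ ~ nonempty z.
Definition one {A} (z : V A) := isSet z /\ nonempty z /\ forall v, memV v z -> empt v.
Definition two {A} (z : V A) := isSet z /\ (forall v, memV v z -> empt v \/ one v) /\
   exists v, memV v z /\ one v.

Lemma empt_tr {A} (u v : V A) : eqV u v -> empt u -> empt v.
Proof. intros H [H1 H2]. split. eapply isSet_eqV; eauto.
 intro Hn. apply H2. eapply nonempty_eqV; [apply eqV_sym; exact H|exact Hn]. Qed.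

Lemma one_tr {A} (u v : V A) : eqV u v -> one u -> one v.
Proof. intros H [H1 [H2 H3]]. split; [|split]. eapply isSet_eqV; eauto.
 eapply nonempty_eqV; eauto.
 intros w Hw. apply H3. eapply memV_eqV_r; [apply eqV_sym; exact H|exact Hw]. Qed.

Lemma two_tr {A} (u v : V A) : eqV u v -> two u -> two v.
Proof. intros H [H1 [H2 [w [Hw1 Hw2]]]]. split; [|split]. eapply isSet_eqV; eauto.
 intros x Hx. apply H2. eapply memV_eqV_r; [apply eqV_sym; exact H|exact Hx].
 exists w; split; auto. eapply memV_eqV_r; eauto. Qed.

Lemma empt_eqV {A} (u v : V A) : empt u -> empt v -> eqV u v.
Proof. destruct u as [a|I f]; destruct v as [b|J g]; intros [H1 H2] [H3 H4]; simpl in *; try tauto.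
 split; intro i; exfalso; [apply H2; exists (f i)|apply H4; exists (g i)]; apply memV_refl. Qed.

Lemma one_eqV {A} (u v : V A) : one u -> one v -> eqV u v.
Proof. destruct u as [a|I f]; destruct v as [b|J g]; intros [H1 [H2 H3]] [H4 [H5 H6]]; simpl in *; try tauto.
 destruct H2 as [y [i Hi]]. destruct H5 as [y' [j Hj]].
 split.
 - intro i'; exists j; apply empt_eqV; [apply H3|apply H6]; apply memV_refl.
 - intro j'; exists i; apply empt_eqV; [apply H3|apply H6]; apply memV_refl.
Qed.

Lemma Mlev_nonempty {A} le (a x : V A) : Mlev le a x -> nonempty x.
Proof. revert x; induction a as [b|I f IH]; intros x; simpl; [tauto|].
 intros [[i [_ [_ [_ [H _]]]]]|[[i [_ [_ [_ [H _]]]]]|[_ [_ [i [_ H]]]]]]; auto. eapply IH; eauto. Qed.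

Lemma LOA_eqV {A} le (x x' : V A) : eqV x x' -> LOA le x -> LOA le x'.
Proof. intros E [H1 [H2 [H3 H4]]]. split; [|split; [|split]].
 eapply isSet_eqV; eauto. eapply nonempty_eqV; eauto.
 intros y Hy. apply H3. eapply memV_eqV_r; [apply eqV_sym; exact E|exact Hy].
 intros a b Ha Hb. eapply memV_eqV_r; [exact E|]. apply (H4 a b); auto.
 eapply memV_eqV_r; [apply eqV_sym; exact E|exact Ha]. Qed.

Lemma LOset_eqV {A} (X : V A -> Prop) (x x' : V A) : eqV x x' -> LOset X x -> LOset X x'.
Proof. intros E [H1 [H2 [H3 H4]]]. split; [|split; [|split]].
 eapply isSet_eqV; eauto. eapply nonempty_eqV; eauto.
 intros y Hy. apply H3. eapply memV_eqV_r; [apply eqV_sym; exact E|exact Hy].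
 intros y z Hy Hz Hs. eapply memV_eqV_r; [exact E|]. apply (H4 y z); auto.
 eapply memV_eqV_r; [apply eqV_sym; exact E|exact Hy]. Qed.

Lemma Mlev_eqV {A} le (a x x' : V A) : eqV x x' -> Mlev le a x -> Mlev le a x'.
Proof. revert x x'; induction a as [b|I f IH]; intros x x' E; simpl; [tauto|].
 intros [[i [H1 [H2 H3]]]|[[i [H1 [H2 H3]]]|[H1 [H2 [i [H3 H4]]]]]].
 - left; exists i; split; [auto|split; [auto|]]. eapply LOA_eqV; eauto.
 - right; left; exists i; split; [auto|split; [auto|]]. eapply LOset_eqV; eauto.
 - right; right; split; [auto|split; [auto|]]. exists i; split; auto. eapply IH; eauto.
Qed.

Lemma Mlev_homog {A} le (a y : V A) a0 : Mlev le a y -> memV (atom A a0) y ->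
  forall w, memV w y -> exists a', eqV w (atom A a').
Proof. revert y; induction a as [b|I f IH]; intros y; simpl; [tauto|].
 intros [[i [_ [_ [_ [_ [H _]]]]]]|[[i [_ [_ [_ [_ [H _]]]]]]|[_ [_ [i [_ H]]]]]]; intros Ha w Hw.
 - auto.
 - exfalso. apply H in Ha. apply Mlev_nonempty in Ha. destruct Ha as [? []].
 - eapply IH; eauto.
Qed.

Lemma Ord_elem {A} (a y : V A) : Ord a -> memV y a -> Ord y.
Proof. intros [H1 [H2 [H3 H4]]] Hy.
 assert (Hy' := H2 y Hy). destruct Hy' as [Hs Ht].
 split; [exact Hs|split; [|split]].
 - intros v Hv. assert (Hva : memV v a) by auto. split. apply (H2 v Hva).
   intros z Hz. assert (Hza : memV z a) by (apply (H2 v Hva); auto).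
   apply (H4 z v y); auto.
 - intros v z Hv Hz. apply H3; auto.
 - intros u v w Hu Hv Hw. apply H4; auto.
Qed.

Lemma Ord_empt {A} (z : V A) : empt z -> Ord z.
Proof. intros [H1 H2]. split; [exact H1|].
 repeat split; intros; exfalso; apply H2; eexists; eauto. Qed.

Lemma no_max {A} I (f : I -> V A) : Ord (node I f) -> isLimit (node I f) ->
  ~ exists i, forall j, memV (f j) (f i) \/ eqV (f j) (f i).
Proof. intros HO [_ HL] [i Hi]. apply HL. exists (f i). split.
 - eapply Ord_elem; [exact HO|apply memV_refl].
 - destruct HO as [_ [H2 _]]. destruct (H2 (f i) (memV_refl _ _ i)) as [Hs Ht].
   remember (f i) as fi eqn:Efi in *. destruct fi as [b|K k]; [destruct Hs|]. simpl. split.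
   + intro j. destruct (Hi j) as [[c Hc]|Hc].
     * exists (Some c). exact Hc.
     * exists None. exact Hc.
   + intros [c|].
     * assert (Hm : memV (k c) (node I f)) by (apply Ht; apply memV_refl).
       destruct Hm as [j Hj]. exists j. apply eqV_sym; exact Hj.
     * exists i. rewrite Efi. apply eqV_refl.
Qed.

Lemma Mlev_lim {A} le I (f : I -> V A) y : Ord (node I f) -> isLimit (node I f) ->
  (exists i, nonempty (f i) /\ Mlev le (f i) y) -> Mlev le (node I f) y.
Proof. intros HO HL [i Hi]. simpl. right; right. split; [exists i; auto|split; [|exists i; auto]].
 apply no_max; auto. Qed.

Lemma Mlev_one {A} le (m y : V A) : one m -> LOA le y -> Mlev le m y.
Proof. destruct m as [b|I g]; intros [H1 [H2 H3]] HL; [destruct H1|]. simpl.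
 destruct H2 as [v [i Hi]]. left. exists i. split; [|split; [|exact HL]].
 - intro j. right. apply empt_eqV; apply H3; apply memV_refl.
 - apply (H3 _ (memV_refl _ _ i)).
Qed.

Lemma LOA_of_Mlev_one {A} le (m y : V A) : one m -> Mlev le m y -> LOA le y.
Proof. destruct m as [b|I g]; intros [H1 [H2 H3]] HM; [destruct H1|]. simpl in HM.
 destruct HM as [[i [_ [_ H]]]|[[i [_ [H _]]]|[_ [H _]]]].
 - exact H.
 - exfalso. apply (H3 _ (memV_refl _ _ i)). exact H.
 - exfalso. apply H. destruct H2 as [v [i Hi]]. exists i. intro j. right.
   apply empt_eqV; apply H3; apply memV_refl.
Qed.

Lemma Mlev_two {A} le (w y : V A) : two w -> LOset (LOA le) y -> Mlev le w y.
Proof. destruct w as [b|I g]; intros [H1 [H2 [v [Hk0 Hv]]]] HL; [destruct H1|]. destruct Hk0 as [k Hk]. simpl.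
 assert (Hgk : one (g k)) by (eapply one_tr; eauto).
 right; left. exists k. split; [|split].
 - intro j. destruct (H2 _ (memV_refl _ _ j)) as [Hj|Hj].
   + left. destruct Hgk as [_ [[u Hu] H3]]. eapply memV_eqV_l; [|exact Hu].
     apply empt_eqV; auto.
   + right. apply one_eqV; auto.
 - apply Hgk.
 - destruct HL as [L1 [L2 [L3 L4]]]. split; [exact L1|split; [exact L2|split]].
   + intros z Hz. apply Mlev_one; auto.
   + intros z z' Hz Hz' Hs. apply (L4 z z'); auto. eapply LOA_of_Mlev_one; eauto.
Qed.

Lemma ex_empt {A} (a : V A) : Ord a -> forall y, memV y a -> exists z, memV z a /\ empt z.
Proof. intros HO y. induction y as [b|I g IH]; intros Hy.
 - destruct HO as [_ [H2 _]]. destruct (H2 _ Hy) as [[] _].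
 - destruct (classic (exists i : I, True)) as [[i _]|Hn].
   + apply (IH i). destruct HO as [_ [H2 _]]. apply (H2 _ Hy). apply memV_refl.
   + exists (node I g). split; auto. split; [exact Logic.I|]. intros [v [i _]]. apply Hn; exists i; auto.
Qed.

Lemma ex_one {A} (a : V A) : Ord a -> isLimit a -> exists w, memV w a /\ one w.
Proof. intros HO HL.
 assert (Step2 : forall y, memV y a -> nonempty y -> exists w, memV w a /\ one w).
 { intro y. induction y as [b|I g IH]; intros Hy Hne.
   - destruct Hne as [? []].
   - destruct (classic (exists i, nonempty (g i))) as [[i Hi]|Hn].
     + apply (IH i); auto. destruct HO as [_ [H2 _]]. apply (H2 _ Hy). apply memV_refl.
     + exists (node I g). split; auto. split; [exact Logic.I|split; [exact Hne|]].
       intros v [i Hv]. split.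
       * destruct HO as [_ [H2 _]]. apply (H2 v). apply (H2 _ Hy). exists i; exact Hv.
       * intro Hv'. apply Hn. exists i. eapply nonempty_eqV; eauto. }
 destruct (classic (exists y, memV y a /\ nonempty y)) as [[y [Hy Hne]]|Hn].
 { eapply Step2; eauto. }
 exfalso. destruct HL as [Hane HL]. destruct Hane as [y0 Hy0].
 destruct (ex_empt a HO y0 Hy0) as [z [Hz Hze]].
 apply HL. exists z. split; [apply Ord_empt; auto|].
 destruct a as [b|II f]; [destruct HO as [[] _]|].
 destruct z as [c|K k]; [destruct Hze as [[] _]|]. simpl. split.
 - intro j. exists None. apply empt_eqV; auto. split.
   + destruct HO as [_ [H2 _]]. apply (H2 _ (memV_refl _ _ j)).
   + intro Hj. apply Hn. exists (f j); split; auto. apply memV_refl.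
 - intros [c|].
   + exfalso. apply (proj2 Hze). exists (k c). apply memV_refl.
   + destruct Hz as [j Hj]. exists j. apply eqV_sym; exact Hj.
Qed.

Lemma ex_two {A} (a : V A) : Ord a -> isLimit a -> exists w, memV w a /\ two w.
Proof. intros HO HL.
 assert (Step2 : forall y, memV y a -> (exists v, memV v y /\ nonempty v) -> exists w, memV w a /\ two w).
 { intro y. induction y as [b|I g IH]; intros Hy Hne.
   - destruct Hne as [? [[] _]].
   - destruct (classic (exists i, exists v, memV v (g i) /\ nonempty v)) as [[i Hi]|Hn].
     + apply (IH i); auto. destruct HO as [_ [H2 _]]. apply (H2 _ Hy). apply memV_refl.
     + assert (Hel : forall v, memV v (node I g) -> empt v \/ one v).
       { intros v Hv. destruct HO as [_ [H2 _]].
         assert (Hva : memV v a) by (apply (H2 _ Hy); exact Hv).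
         destruct (classic (nonempty v)) as [Hne'|Hne'].
         - right. split; [apply (H2 _ Hva)|split; [exact Hne'|]].
           intros u Hu. split. apply (H2 u). apply (H2 _ Hva). exact Hu.
           intro Hu'. apply Hn. destruct Hv as [i Hi]. exists i, u. split; auto.
           eapply memV_eqV_r; eauto.
         - left. split; [apply (H2 _ Hva)|exact Hne']. }
       exists (node I g). split; auto. split; [exact Logic.I|split; [exact Hel|]].
       destruct Hne as [v [Hv Hvn]]. exists v. split; auto.
       destruct (Hel v Hv) as [[_ Hx]|Hx]; [contradiction|exact Hx]. }
 destruct (classic (exists y, memV y a /\ exists v, memV v y /\ nonempty v)) as [[y [Hy Hne]]|Hn].
 { eapply Step2; eauto. }
 exfalso. destruct (ex_one a HO HL) as [m [Hm Hmo]].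
 destruct HL as [Hane HL]. destruct Hane as [y0 Hy0].
 destruct (ex_empt a HO y0 Hy0) as [z [Hz Hze]].
 apply HL. exists m. split; [eapply Ord_elem; eauto|].
 destruct a as [b|II f]; [destruct HO as [[] _]|].
 destruct m as [c|K k]; [destruct Hmo as [[] _]|]. simpl. split.
 - intro j. destruct HO as [_ [H2 _]].
   destruct (H2 _ (memV_refl _ _ j)) as [Hjs Hjt].
   destruct (classic (nonempty (f j))) as [Hj|Hj].
   + exists None. apply one_eqV; auto. split; [exact Hjs|split; [exact Hj|]].
     intros u Hu. split. apply (H2 u). apply Hjt. exact Hu.
     intro Hu'. apply Hn. exists (f j). split; [apply memV_refl|]. exists u; auto.
   + destruct Hmo as [_ [[u [c Hc]] Hm3]]. exists (Some c). apply empt_eqV.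
     split; auto. apply Hm3. apply memV_refl.
 - intros [c|].
   + destruct HO as [_ [H2 _]]. destruct (H2 _ Hm) as [_ Ht].
     destruct (Ht (k c) (memV_refl _ _ c)) as [j Hj]. exists j. apply eqV_sym; exact Hj.
   + destruct Hm as [j Hj]. exists j. apply eqV_sym; exact Hj.
Qed.

Definition setP {A : Type} (P : A -> Prop) : V A :=
  node {a : A | P a} (fun p => atom A (proj1_sig p)).
Definition LOAp {A : Type} (le : A -> A -> Prop) (P : A -> Prop) :=
  (exists a, P a) /\ (forall a b, P a -> le b a -> P b).
Definition Jt {A : Type} (le : A -> A -> Prop) := (A + {P : A -> Prop | LOAp le P})%type.
Definition gU {A : Type} (le : A -> A -> Prop) (j : Jt le) : V A :=
  match j with inl a => atom A a | inr P => setP (proj1_sig P) end.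
Definition sub {A : Type} (le : A -> A -> Prop) (Q : Jt le -> Prop) : V A :=
  node {j | Q j} (fun p => gU le (proj1_sig p)).
Definition bigX {A : Type} (le : A -> A -> Prop) (alpha : V A) : V A :=
  node {Q : Jt le -> Prop | Mlev le alpha (sub le Q)} (fun Q => sub le (proj1_sig Q)).
Definition Q1 {A : Type} (le : A -> A -> Prop) (j : Jt le) : Prop :=
  match j with inl _ => True | inr _ => False end.
Definition Q2 {A : Type} (le : A -> A -> Prop) (j : Jt le) : Prop :=
  match j with inl _ => False | inr _ => True end.

Lemma LOA_setP {A} le (P : A -> Prop) : LOAp le P -> LOA le (setP P).
Proof. intros [[a Ha] Hd]. split; [exact Logic.I|split; [|split]].
 - exists (atom A a). exists (exist _ a Ha). reflexivity.
 - intros y [p Hp]. exists (proj1_sig p). exact Hp.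
 - intros a0 b [p Hp] Hb. simpl in Hp. destruct p as [a1 H1]. simpl in Hp. subst a1.
   exists (exist _ b (Hd a0 b H1 Hb)). reflexivity.
Qed.

Lemma LOA_sub1 {A} le (a0 : A) : LOA le (sub le (@Q1 A le)).
Proof. split; [exact Logic.I|split; [|split]].
 - exists (atom A a0). exists (exist _ (inl a0) Logic.I). reflexivity.
 - intros y [[[a|P] Hq] Hp]; [|destruct Hq]. exists a. exact Hp.
 - intros a b _ _. exists (exist _ (inl b) Logic.I). reflexivity.
Qed.

Lemma LOset_sub2 {A} le (le_refl : forall a : A, le a a) (a0 : A) : LOset (LOA le) (sub le (@Q2 A le)).
Proof.
 assert (HT : LOAp le (fun _ : A => True)) by (split; [exists a0; exact Logic.I|auto]).
 split; [exact Logic.I|split; [|split]].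
 - exists (setP (fun _ : A => True)). exists (exist _ (inr (exist _ _ HT)) Logic.I). apply eqV_refl.
 - intros y [[[a|[P HP]] Hq] Hp]; [destruct Hq|]. simpl in Hp.
   eapply LOA_eqV; [apply eqV_sym; exact Hp|]. apply LOA_setP; exact HP.
 - intros y z _ Hz _.
   set (P := fun a => memV (atom A a) z).
   assert (HP : LOAp le P).
   { destruct Hz as [_ [[w Hw] [H3 H4]]]. split.
     - destruct (H3 w Hw) as [a Ha]. exists a. unfold P. eapply memV_eqV_l; eauto.
     - intros a b Ha Hb. unfold P. eapply H4; eauto. }
   exists (exist _ (inr (exist _ P HP)) Logic.I). simpl.
   destruct Hz as [Hs [_ [H3 _]]]. destruct z as [c|K k]; [destruct Hs|]. simpl. split.
   + intro kk. destruct (H3 (k kk) (memV_refl _ _ kk)) as [a Ha].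
     destruct (k kk) as [a'|] eqn:E; [|destruct Ha]. simpl in Ha. subst a'.
     assert (Hm : P a) by (unfold P; rewrite <- E; apply memV_refl).
     exists (exist _ a Hm). reflexivity.
   + intros [a Ha]. destruct Ha as [kk Hk]. exists kk. apply eqV_sym. exact Hk.
Qed.

Lemma M_lim_one {A} le (alpha y : V A) : Ord alpha -> isLimit alpha -> LOA le y -> Mlev le alpha y.
Proof. intros HO HL Hy. destruct (ex_one alpha HO HL) as [w [Hw Hwo]].
 destruct alpha as [b|II f]; [destruct HO as [[] _]|]. destruct Hw as [i Hi].
 assert (Ho : one (f i)) by (eapply one_tr; eauto).
 apply Mlev_lim; auto. exists i. split; [apply Ho|]. apply Mlev_one; auto. Qed.

Lemma M_lim_two {A} le (alpha y : V A) : Ord alpha -> isLimit alpha -> LOset (LOA le) y -> Mlev le alpha y.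
Proof. intros HO HL Hy. destruct (ex_two alpha HO HL) as [w [Hw Hwo]].
 destruct alpha as [b|II f]; [destruct HO as [[] _]|]. destruct Hw as [i Hi].
 assert (Ho : two (f i)) by (eapply two_tr; eauto).
 apply Mlev_lim; auto. exists i. split.
 - destruct Ho as [_ [_ [v [Hv _]]]]. exists v; exact Hv.
 - apply Mlev_two; auto. Qed.

Theorem fact4p13 (A : Type) (le : A -> A -> Prop)
  (le_refl : forall a, le a a)
  (le_trans : forall a b c, le a b -> le b c -> le a c)
  (A_infinite : forall l : list A, exists a, ~ In a l)
  (no_min : forall a, exists b, le b a /\ ~ le a b)
  (alpha : V A) (Halpha : Ord alpha)
  (Hzl : ~ nonempty alpha \/ isLimit alpha) :
  exists x, Mlev le (succV alpha) x /\ ~ inM le (bigcup x).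
Proof.
 destruct (A_infinite nil) as [a0 _].
 assert (HT : LOAp le (fun _ : A => True)) by (split; [exists a0; exact Logic.I|auto]).
 destruct Hzl as [Hz|HL].
 - exists (setP (fun _ : A => True)). split.
   + destruct alpha as [b|II f]; [destruct Halpha as [[] _]|]. simpl. left. exists None.
     split; [|split; [exact Hz|apply LOA_setP; exact HT]].
     intros [k|].
     * exfalso. apply Hz. exists (f k). apply memV_refl.
     * right. apply eqV_refl.
   + intros [a [_ [_ HM]]]. apply Mlev_nonempty in HM. destruct HM as [y [[i e] _]]. destruct e.
 - assert (HM1 : Mlev le alpha (sub le (@Q1 A le))) by (apply M_lim_one; auto; apply LOA_sub1; exact a0).
   assert (HM2 : Mlev le alpha (sub le (@Q2 A le))) by (apply M_lim_two; auto; apply LOset_sub2; auto).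
   exists (bigX le alpha). split.
   + destruct alpha as [b|II f] eqn:Ea; [destruct Halpha as [[] _]|]. rewrite <- Ea in *.
     simpl. right; left. exists None. split; [|split].
     * intros [k|]; [left; subst alpha; apply memV_refl|right; apply eqV_refl].
     * apply HL.
     * split; [exact Logic.I|split; [|split]].
       -- exists (sub le (@Q1 A le)). exists (exist (fun Q => Mlev le alpha (sub le Q)) (@Q1 A le) HM1). apply eqV_refl.
       -- intros y [[Q HQ] Hy]. eapply Mlev_eqV; [apply eqV_sym; exact Hy|exact HQ].
       -- intros y z [[Q HQ] Hy] Hz [Hzs [_ Hsub]].
          set (Q' := fun j => memV (gU le j) z).
          assert (E : eqV z (sub le Q')).
          { destruct z as [c|K k]; [destruct Hzs|]. simpl. split.
            - intro kk. assert (Hm : memV (k kk) (sub le Q)).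
              { eapply memV_eqV_r; [exact Hy|]. apply Hsub. apply memV_refl. }
              destruct Hm as [[j Hj] Hkj]. simpl in Hkj.
              assert (Hq : Q' j) by (unfold Q'; eapply memV_eqV_l; [exact Hkj|apply memV_refl]).
              exists (exist _ j Hq). exact Hkj.
            - intros [j Hj]. destruct Hj as [kk Hk]. exists kk. apply eqV_sym; exact Hk. }
          exists (exist _ Q' (Mlev_eqV _ _ _ _ E Hz)). exact E.
   + intros [a [_ [_ HM]]].
     assert (Ha : memV (atom A a0) (bigcup (bigX le alpha))).
     { exists (existT (fun i => idx (elt (bigX le alpha) i)) (exist (fun Q => Mlev le alpha (sub le Q)) (@Q1 A le) HM1) (exist _ (inl a0) Logic.I)).
       reflexivity. }
     assert (Hw : memV (setP (fun _ : A => True)) (bigcup (bigX le alpha))).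
     { exists (existT (fun i => idx (elt (bigX le alpha) i)) (exist (fun Q => Mlev le alpha (sub le Q)) (@Q2 A le) HM2)
               (exist _ (inr (exist _ _ HT)) Logic.I)).
       apply eqV_refl. }
     destruct (Mlev_homog _ _ _ _ HM Ha _ Hw) as [a' Ha']. exact Ha'.
Qed.
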